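(* Let $h\ge2$ be an integer and let $G_h$ be the directed graph with vertices $s,t,u_1,\dots,u_h,v_1,\dots,v_h$ and arcs: $(u_j,u_{j+1})$ and $(v_j,v_{j+1})$ for $1\le j\le h-1$, each of weight $1$; and $(s,u_1),(u_h,s),(t,v_1),(v_h,t)$, and $(u_{i+1},v_i),(v_{i+1},u_i)$ for $1\le i\le h-1$, each of weight $+\infty$. Then the optimum value of the LP relaxation of $st$-Bi-Cut on $G_h$ equals $2(h-1)/h$, and every optimal solution $\mathbf{x}$ satisfies $x(u_i,u_{i+1})+x(v_i,v_{i+1})=2/h$ for all $1\le i\le h-1$, and hence $x_e\le 2/h$ for every arc $e$. Consequently, for every positive integer $\ell$, taking $h>2\ell$ gives a two-terminal instance of $\textsc{Dir-MC}$ for which no optimal solution of $\textsc{Dir-MC-Rel}$ is $1/\ell$-integral.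
   Context: The LP relaxation for two terminals $s,t$: minimize $\sum_e w_ex_e$ subject to $\sum_{e\in p}x_e\ge1$ for every directed $s$–$t$ path and every directed $t$–$s$ path $p$, and $x_e\ge0$; arcs of weight $+\infty$ contribute $0$ to the objective if $x_e=0$ and $+\infty$ otherwise (so any finite-cost solution has $x_e=0$ on them). A solution is $1/\ell$-integral if every $x_e$ is an integer multiple of $1/\ell$. *)

(* Defs.v *)
From HB Require Import structures.
From mathcomp Require Import all_boot all_order all_algebra.
Unset Printing Implicit Defensive.
Import Order.TTheory GRing.Theory Num.Theory.

(* Vertices of G_h:  inl false = s, inl true = t,
   inr (false, i) = u_(i+1), inr (true, i) = v_(i+1)   for i : 'I_h. *)
Definition vert (h : nat) : finType := (bool + bool * 'I_h)%type.

Definition s_ {h} : vert h := inl false.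
Definition t_ {h} : vert h := inl true.
Definition u_ {h} (i : 'I_h) : vert h := inr (false, i).
Definition v_ {h} (i : 'I_h) : vert h := inr (true, i).

Definition fin_arc (h : nat) : rel (vert h) := fun a b =>
  match a, b with
  | inr (c, i), inr (c', j) => (c == c') && (nat_of_ord j == i.+1)
  | _, _ => false
  end.

(* weight-+oo arcs: (s,u_1), (u_h,s), (t,v_1), (v_h,t),
   (u_(i+1), v_i), (v_(i+1), u_i) *)
Definition inf_arc (h : nat) : rel (vert h) := fun a b =>
  match a, b with
  | inl c, inr (c', j) => (c == c') && (nat_of_ord j == 0)
  | inr (c, i), inl c' => (c == c') && (nat_of_ord i == h.-1)
  | inr (c, i), inr (c', j) => (c != c') && (nat_of_ord i == j.+1)
  | _, _ => false
  end.


Definition gh_arc (h : nat) : rel (vert h) := fun a b => fin_arc h a b || inf_arc h a b.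

Definition dipath (h : nat) (a b : vert h) (p : seq (vert h)) : bool :=
  [&& path (gh_arc h) a p, uniq (a :: p) & last a p == b].

Local Open Scope ring_scope.

Definition path_sum {R : realFieldType} {h} (x : vert h -> vert h -> R)
    (a : vert h) (p : seq (vert h)) : R :=
  \sum_(e <- zip (a :: p) p) x e.1 e.2.

(* finite-cost feasible solutions of the st-Bi-Cut LP relaxation on G_h
   (arcs of weight +oo must carry 0 for the cost to be finite) *)
Definition bicut_feasible {R : realFieldType} (h : nat) (x : vert h -> vert h -> R) : Prop :=
  [/\ (forall a b, gh_arc h a b -> 0 <= x a b),
      (forall a b, inf_arc h a b -> x a b = 0),
      (forall p, dipath h s_ t_ p -> 1 <= path_sum x s_ p) &
      (forall p, dipath h t_ s_ p -> 1 <= path_sum x t_ p)].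

Definition bicut_cost {R : realFieldType} (h : nat) (x : vert h -> vert h -> R) : R :=
  \sum_(a : vert h) \sum_(b : vert h | fin_arc h a b) x a b.

Definition bicut_optimal {R : realFieldType} (h : nat) (x : vert h -> vert h -> R) : Prop :=
  bicut_feasible h x /\ forall y, bicut_feasible h y -> bicut_cost h x <= bicut_cost h y.

Definition frac_integral {R : realFieldType} (h l : nat) (x : vert h -> vert h -> R) : Prop :=
  forall a b, gh_arc h a b -> exists k : int, x a b = k%:~R / l%:R.

(* Main.v *)
Require Import Defs.
From HB Require Import structures.
From mathcomp Require Import all_boot all_order all_algebra.
From mathcomp Require Import ring lra zify.
Import Order.TTheory GRing.Theory Num.Theory.
Local Open Scope ring_scope.

Definition W (n : nat) (c : bool) (k : nat) : vert n.+1 := inr (c, inord k).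

Lemma path_sum_nil (R : realFieldType) h (x : vert h -> vert h -> R) a :
  path_sum x a [::] = 0.
Proof. by rewrite /path_sum big_nil. Qed.

Lemma path_sum_cons (R : realFieldType) h (x : vert h -> vert h -> R) a b p :
  path_sum x a (b :: p) = x a b + path_sum x b p.
Proof. by rewrite /path_sum /= big_cons. Qed.

Lemma path_sum_cat (R : realFieldType) h (x : vert h -> vert h -> R) a p1 p2 :
  path_sum x a (p1 ++ p2) = path_sum x a p1 + path_sum x (last a p1) p2.
Proof.
elim: p1 a => [|b p IH] a /=; first by rewrite path_sum_nil add0r.
by rewrite !path_sum_cons IH addrA.
Qed.

Lemma path_sum_chain (R : realFieldType) h (x : vert h -> vert h -> R)
  (f : nat -> vert h) k len :
  path_sum x (f k) (map f (iota k.+1 len)) = \sum_(k <= i < (k + len)%N) x (f i) (f i.+1).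
Proof.
elim: len k => [|len IH] k; first by rewrite big_geq ?path_sum_nil //; lia.
rewrite /= path_sum_cons IH [in RHS]big_ltn; last by lia.
by rewrite addnS addSn.
Qed.

Lemma path_chain (T : Type) (e : rel T) (f : nat -> T) k len :
  (forall i, (k <= i < k + len)%N -> e (f i) (f i.+1)) ->
  path e (f k) (map f (iota k.+1 len)).
Proof.
elim: len k => [|len IH] k H //=.
apply/andP; split; first by apply: H; lia.
by apply: IH => i hi; apply: H; lia.
Qed.

Lemma last_chain (T : Type) (f : nat -> T) k len :
  last (f k) (map f (iota k.+1 len)) = f (k + len)%N.
Proof.
elim: len k => [|len IH] k; first by rewrite addn0.
by rewrite /= IH addSn addnS.
Qed.

Lemma W_inj n c c' i j : (i <= n)%N -> (j <= n)%N -> W n c i = W n c' j -> c = c' /\ i = j.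
Proof.
move=> hi hj [-> /(congr1 val)] /=; rewrite !inordK //.
Qed.

Lemma uniq_W n c s : (forall i, i \in s -> i <= n)%N -> uniq s -> uniq (map (W n c) s).
Proof.
move=> hs us; rewrite map_inj_in_uniq // => i j hi hj /W_inj [] //; by apply: hs.
Qed.

Lemma W_in n c c' i s : (i <= n)%N -> (forall j, j \in s -> j <= n)%N ->
  W n c i \in map (W n c') s -> c = c'.
Proof.
move=> hi hs /mapP [j hj /W_inj []] //; by apply: hs.
Qed.

Lemma inl_notin n c c' s : inl c \notin map (W n c') s.
Proof. by apply/mapP => -[]. Qed.

Lemma arc_start n c : inf_arc n.+1 (inl c) (W n c 0).
Proof. by rewrite /= eqxx inordK. Qed.

Lemma arc_cross n c m : (m < n)%N -> inf_arc n.+1 (W n c m.+1) (W n (~~c) m).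
Proof. move=> hm; rewrite /= !inordK; [by rewrite eqxx andbT; case: c | lia | lia]. Qed.

Lemma arc_end n c : inf_arc n.+1 (W n c n) (inl c).
Proof. by rewrite /= eqxx inordK //= eqxx. Qed.

Lemma arc_fin n c i : (i < n)%N -> fin_arc n.+1 (W n c i) (W n c i.+1).
Proof. move=> hi; rewrite /= eqxx !inordK //; lia. Qed.

Lemma gh_start n c : gh_arc n.+1 (inl c) (W n c 0).
Proof. by rewrite /gh_arc arc_start orbT. Qed.
Lemma gh_cross n c m : (m < n)%N -> gh_arc n.+1 (W n c m.+1) (W n (~~c) m).
Proof. by move=> hm; rewrite /gh_arc arc_cross ?orbT. Qed.
Lemma gh_end n c : gh_arc n.+1 (W n c n) (inl c).
Proof. by rewrite /gh_arc arc_end orbT. Qed.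
Lemma gh_fin n c i : (i < n)%N -> gh_arc n.+1 (W n c i) (W n c i.+1).
Proof. by move=> hi; rewrite /gh_arc arc_fin. Qed.

Definition P n c m : seq (vert n.+1) :=
  map (W n c) (iota 0 m.+2) ++ map (W n (~~c)) (iota m (n - m).+1) ++ [:: inl (~~c)].

Lemma pathC (T : Type) (e : rel T) x y p : path e x (y :: p) = e x y && path e y p.
Proof. by []. Qed.

Lemma iotaS k len : iota k len.+1 = k :: iota k.+1 len.
Proof. by []. Qed.

Lemma uniq_P_aux n c s1 s2 : (forall i, i \in s1 -> i <= n)%N ->
  (forall i, i \in s2 -> i <= n)%N -> uniq s1 -> uniq s2 ->
  uniq (inl c :: map (W n c) s1 ++ map (W n (~~c)) s2 ++ [:: inl (~~c)]).
Proof.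
move=> h1 h2 u1 u2; rewrite cons_uniq; apply/andP; split.
  by rewrite !mem_cat !negb_or !inl_notin; case: c.
rewrite cat_uniq uniq_W //= cat_uniq uniq_W //= has_cat /= !orbF !negb_or !inl_notin !andbT.
apply/hasPn => y /mapP [j hj ->]; apply/negP => /(W_in _ _ _ _ _ _ h1).
by move=> /(_ (h2 _ hj)); case: c.
Qed.

Lemma P_dipath n c m : (m < n)%N -> dipath n.+1 (inl c) (inl (~~c)) (P n c m).
Proof.
move=> hm; rewrite /dipath /P; apply/and3P; split.
- rewrite (iotaS 0 m.+1) (iotaS m (n-m)).
  rewrite [map _ (0%N :: _)]map_cons [map _ (m :: _)]map_cons cat_cons.
  rewrite pathC gh_start andTb.
  rewrite cat_path (last_chain _ (W n c) 0) add0n; apply/andP; split.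
    apply: path_chain => i hi; apply: gh_fin; lia.
  rewrite pathC gh_cross // andTb.
  rewrite cat_path (last_chain _ (W n (~~c)) m) subnKC; last lia.
  rewrite pathC gh_end andbT.
  apply: path_chain => i hi; apply: gh_fin; lia.
- apply: uniq_P_aux; try apply: iota_uniq; move=> i; rewrite mem_iota; lia.
- by rewrite last_cat /= last_cat.
Qed.

Lemma P_sum (R : realFieldType) n c m (x : vert n.+1 -> vert n.+1 -> R) : (m < n)%N ->
  path_sum x (inl c) (P n c m) = x (inl c) (W n c 0) +
    \sum_(0 <= i < m.+1) x (W n c i) (W n c i.+1) + x (W n c m.+1) (W n (~~c) m) +
    \sum_(m <= i < n) x (W n (~~c) i) (W n (~~c) i.+1) + x (W n (~~c) n) (inl (~~c)).
Proof.
move=> hm; rewrite /P (iotaS 0 m.+1) (iotaS m (n-m)).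
rewrite [map _ (0%N :: _)]map_cons [map _ (m :: _)]map_cons cat_cons.
rewrite path_sum_cons path_sum_cat (path_sum_chain _ _ _ (W n c) 0) add0n.
rewrite (last_chain _ (W n c) 0) add0n cat_cons path_sum_cons path_sum_cat.
rewrite (path_sum_chain _ _ _ (W n (~~c)) m) (last_chain _ (W n (~~c)) m) subnKC; last lia.
by rewrite path_sum_cons path_sum_nil addr0 !addrA.
Qed.

Lemma constraint (R : realFieldType) n c m (x : vert n.+1 -> vert n.+1 -> R) :
  bicut_feasible n.+1 x -> (m < n)%N ->
  1 <= \sum_(0 <= i < m.+1) x (W n c i) (W n c i.+1) +
       \sum_(m <= i < n) x (W n (~~c) i) (W n (~~c) i.+1).
Proof.
move=> [_ hinf hst hts] hm.
have H : 1 <= path_sum x (inl c) (P n c m).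
  by case: c; [apply: hts | apply: hst]; apply: (P_dipath n _ m hm).
move: H; rewrite P_sum // !hinf ?arc_start ?arc_end ?arc_cross //.
by rewrite add0r addr0 addr0.
Qed.

Lemma W_ord n c (i : 'I_n.+1) : inr (c, i) = W n c i.
Proof. by rewrite /W inord_val. Qed.

Lemma cost_eq (R : realFieldType) n (x : vert n.+1 -> vert n.+1 -> R) :
  bicut_cost n.+1 x = \sum_(i < n) (x (W n false i) (W n false i.+1) + x (W n true i) (W n true i.+1)).
Proof.
rewrite /bicut_cost big_sumType /= big1 ?add0r; last first.
  by move=> c _; rewrite big_pred0 // => -[].
pose G (c : bool) (i : 'I_n.+1) := if (i < n)%N then x (W n c i) (W n c i.+1) else 0.
rewrite (eq_bigr (fun p => G p.1 p.2)); last first.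
  move=> [c i] _ /=; rewrite /G; case: ltnP => hi.
    rewrite (big_pred1 (W n c i.+1)) ?W_ord // => -[c'|[c' j]] //=.
    rewrite /W; apply/idP/idP => [/andP[/eqP<- /eqP hj]|/eqP [<- ->]].
      by apply/eqP; congr (inr (c, _)); apply: ord_inj; rewrite hj inordK //; lia.
    by rewrite eqxx inordK //=; lia.
  rewrite big_pred0 // => -[c'|[c' j]] //=.
  apply/andP => -[_ /eqP hj]; have := ltn_ord j; lia.
rewrite -(pair_big xpredT xpredT G) /= big_bool /= !big_ord_recr /= /G /=.
rewrite ltnn !addr0 addrC -big_split /=.
by apply: eq_bigr => i _; rewrite ltn_ord.
Qed.

Definition cx {R : realFieldType} {n} (x : vert n.+1 -> vert n.+1 -> R) (i : nat) : R :=
  x (W n false i) (W n false i.+1) + x (W n true i) (W n true i.+1).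

Lemma sum_constraint (R : realFieldType) n (x : vert n.+1 -> vert n.+1 -> R) m :
  bicut_feasible n.+1 x -> (m < n)%N -> 2 <= \sum_(i < n) cx x i + cx x m.
Proof.
move=> hx hm.
have h1 := constraint _ _ false _ _ hx hm; have h2 := constraint _ _ true _ _ hx hm; simpl in h1, h2.
have -> : \sum_(i < n) cx x i + cx x m =
  \sum_(0 <= i < m.+1) cx x i + \sum_(m <= i < n) cx x i.
  rewrite -(big_mkord xpredT) (@big_cat_nat _ _ _ m 0 n xpredT) //=; last lia.
  rewrite big_nat_recr //=; lra.
rewrite /cx !big_split /=. lra.
Qed.

Lemma lower (R : realFieldType) n (x : vert n.+1 -> vert n.+1 -> R) :
  bicut_feasible n.+1 x -> 2 * n%:R <= (n.+1)%:R * \sum_(i < n) cx x i.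
Proof.
move=> hx.
set C := \sum_(i < n) cx x i.
have H : forall m : 'I_n, true -> 2 <= C + cx x m.
  by move=> m _; apply: sum_constraint.
have := ler_sum (index_enum (ordinal n)) H.
rewrite sumr_const card_ord big_split /= sumr_const card_ord -/C -[2 *+ n]mulr_natr -[C *+ n]mulr_natr.
have -> : (n.+1)%:R * C = C * n%:R + C by rewrite -natr1 mulrDl mul1r mulrC.
by [].
Qed.

Lemma lin_help (R : realFieldType) (d : R) (p q k : nat) : 0 <= d -> (p <= q + k)%N ->
  p%:R * d - q%:R * d <= k%:R * d.
Proof.
move=> hd hpq; rewrite -mulrBl; apply: ler_wpM2r => //.
by rewrite lerBlDr -natrD ler_nat addnC.
Qed.

Lemma lin_help1 (R : realFieldType) (d : R) (p q : nat) : 0 <= d -> (p <= q + 1)%N ->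
  p%:R * d - q%:R * d <= d.
Proof. by move=> hd hpq; have := lin_help _ _ _ _ _ hd hpq; rewrite mul1r. Qed.

Lemma lin_help0 (R : realFieldType) (d : R) (p q : nat) : 0 <= d -> (p <= q + 0)%N ->
  p%:R * d - q%:R * d <= 0.
Proof. by move=> hd hpq; have := lin_help _ _ _ _ _ hd hpq; rewrite mul0r. Qed.

Definition ysol (R : realFieldType) n : vert n.+1 -> vert n.+1 -> R :=
  fun a b => if fin_arc n.+1 a b then (n.+1)%:R^-1 else 0.

Definition phi (R : realFieldType) n (c : bool) (v : vert n.+1) : R :=
  match v with
  | inl c0 => if c0 == c then 0 else 1
  | inr (c0, i) => (i + (c0 != c))%:R * (n.+1)%:R^-1
  end.

Lemma pot_path (R : realFieldType) h (x : vert h -> vert h -> R) (f : vert h -> R) a p :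
  path (gh_arc h) a p -> (forall a b, gh_arc h a b -> f b - f a <= x a b) ->
  f (last a p) - f a <= path_sum x a p.
Proof.
move=> hp hf; elim: p a hp => [|b p IH] a /=.
  by rewrite path_sum_nil subrr.
move=> /andP [hab hp]; rewrite path_sum_cons.
have -> : f (last b p) - f a = (f (last b p) - f b) + (f b - f a) by rewrite addrA subrK.
by rewrite [x a b + _]addrC; apply: lerD; [exact: IH | exact: hf].
Qed.

Lemma pot_arc (R : realFieldType) n c a b : gh_arc n.+1 a b ->
  phi R n c b - phi R n c a <= ysol R n a b.
Proof.
set d : R := (n.+1)%:R^-1.
have hd0 : 0 < d by rewrite invr_gt0 ltr0n.
have hd1 : (n.+1)%:R * d = 1 by rewrite mulfV // pnatr_eq0.
have hd1' : d <= 1 by rewrite invf_le1 ?ltr0n // ler1n.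
rewrite /ysol -/d.
move: a b => [c0|[c0 i]] [c1|[c1 j]] //=.
- rewrite /gh_arc /= => /andP [/eqP <- /eqP hj]; rewrite hj add0n.
  case: (c0 == c) => /=; first by rewrite mul0r subrr.
  by rewrite mul1r subr_le0.
- rewrite /gh_arc /= => /andP [/eqP <- /eqP hi]; rewrite hi /=.
  case: (c0 == c) => /=; first by rewrite addn0 sub0r oppr_le0 mulr_ge0 // ltW.
  by rewrite addn1 hd1 subrr.
- rewrite /gh_arc /=; case: (boolP ((c0 == c1) && (nat_of_ord j == i.+1)%N)) => /=.
    move=> /andP [/eqP <- /eqP ->] _; rewrite -/d.
    apply: lin_help1; [exact: ltW | lia].
  move=> _ /andP [hc /eqP hi]; rewrite -/d.
  apply: lin_help0; first exact: ltW.
  rewrite hi addn0; have := leq_b1 (c1 != c); lia.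
Qed.

Lemma fin_inf n a b : inf_arc n.+1 a b -> fin_arc n.+1 a b = false.
Proof.
by move: a b => [c0|[c0 i]] [c1|[c1 j]] //= /andP [/negbTE -> _].
Qed.

Lemma y_feasible (R : realFieldType) n : bicut_feasible n.+1 (ysol R n).
Proof.
have dip : forall c p, dipath n.+1 (inl c) (inl (~~c)) p -> 1 <= path_sum (ysol R n) (inl c) p.
  move=> c p /and3P [hp _ /eqP hl].
  have := pot_path _ _ (ysol R n) (phi R n c) _ _ hp (@pot_arc R n c).
  rewrite hl /= eqxx; case: (c) => /=; rewrite ?subr0 //.
split.
- by move=> a b _; rewrite /ysol; case: ifP => // _; rewrite invr_ge0 ler0n.
- by move=> a b /fin_inf h; rewrite /ysol h.
- by move=> p /(dip false).
- by move=> p /(dip true).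
Qed.

Lemma y_cost (R : realFieldType) n : bicut_cost n.+1 (ysol R n) = 2 * n%:R / (n.+1)%:R.
Proof.
rewrite cost_eq /ysol (eq_bigr (fun _ => 2 / (n.+1)%:R)).
  by rewrite sumr_const card_ord -[_ *+ n]mulr_natr mulrAC.
by move=> i _; rewrite !arc_fin //; ring.
Qed.

Lemma lb (R : realFieldType) n (x : vert n.+1 -> vert n.+1 -> R) :
  bicut_feasible n.+1 x -> 2 * n%:R / (n.+1)%:R <= bicut_cost n.+1 x.
Proof.
move=> hx; rewrite cost_eq ler_pdivrMr ?ltr0n // [X in _ <= X]mulrC; exact: lower.
Qed.

Lemma opt_c (R : realFieldType) n (x : vert n.+1 -> vert n.+1 -> R) :
  bicut_optimal n.+1 x -> forall m, (m < n)%N -> cx x m = 2 / (n.+1)%:R.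
Proof.
move=> [hx hopt] m hm.
have hc : bicut_cost n.+1 x = 2 * n%:R / (n.+1)%:R.
  apply: le_anti; rewrite lb // andbT -(y_cost R n); exact: hopt (y_feasible R n).
have hC : \sum_(i < n) cx x i = 2 * n%:R / (n.+1)%:R by rewrite -hc cost_eq.
have hh : (n.+1)%:R != 0 :> R by rewrite pnatr_eq0.
have Hs : \sum_(i < n) (\sum_(i < n) cx x i + cx x i - 2) = 0.
  rewrite sumrB big_split /= !sumr_const card_ord hC.
  rewrite -[_ *+ n]mulr_natr -[2 *+ n]mulr_natr -natr1 in hh *; by field.
have H := @psumr_eq0P R (ordinal n) xpredT (fun i => \sum_(i < n) cx x i + cx x i - 2).
have Hp : forall i : 'I_n, true -> 0 <= \sum_(i < n) cx x i + cx x i - 2.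
  by move=> i _; rewrite subr_ge0; exact: sum_constraint.
have := H Hp Hs (Ordinal hm) isT.
rewrite /= hC => /eqP; rewrite subr_eq0 => /eqP h1.
have -> : cx x m = 2 - 2 * n%:R / (n.+1)%:R.
  by move: h1; set A := 2 * n%:R / (n.+1)%:R => h1; rewrite -h1 addrC addKr.
by rewrite -natr1 in hh *; field.
Qed.

Lemma part3 (R : realFieldType) n (x : vert n.+1 -> vert n.+1 -> R) :
  bicut_optimal n.+1 x -> forall i j : 'I_n.+1, nat_of_ord j = i.+1 ->
  x (u_ i) (u_ j) + x (v_ i) (v_ j) = 2 / (n.+1)%:R.
Proof.
move=> hopt i j hj; rewrite /u_ /v_ !W_ord hj.
have hi : (i < n)%N by have := ltn_ord j; lia.
exact: (opt_c _ _ _ hopt _ hi).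
Qed.

Theorem mainTheorem12 (R : realFieldType) (h : nat) (hh : (2 <= h)%N) :
  [/\ (* the LP optimum value is 2(h-1)/h *)
      (exists x : vert h -> vert h -> R,
          bicut_feasible h x /\ bicut_cost h x = 2 * (h.-1)%:R / h%:R),
      (forall x : vert h -> vert h -> R,
          bicut_feasible h x -> 2 * (h.-1)%:R / h%:R <= bicut_cost h x),
      (* every optimal solution has x(u_i,u_(i+1)) + x(v_i,v_(i+1)) = 2/h *)
      (forall x : vert h -> vert h -> R, bicut_optimal h x ->
          forall i j : 'I_h, nat_of_ord j = i.+1 ->
            x (u_ i) (u_ j) + x (v_ i) (v_ j) = 2 / h%:R),
      (* hence x_e <= 2/h on every arc *)
      (forall x : vert h -> vert h -> R, bicut_optimal h x ->
          forall a b, gh_arc h a b -> x a b <= 2 / h%:R) &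
      (* consequence: for h > 2l no optimal solution is 1/l-integral *)
      (forall l : nat, (0 < l)%N -> (2 * l < h)%N ->
          forall x : vert h -> vert h -> R, bicut_optimal h x -> ~ frac_integral h l x)].
Proof.
case: h hh => [//|n] hh.
have hpos : 0 < 2 / (n.+1)%:R :> R by rewrite divr_gt0 ?ltr0n.
split.
- exists (ysol R n); split; [exact: y_feasible | exact: y_cost].
- move=> x hx; exact: lb.
- exact: part3.
- move=> x hopt a b hab.
  have [hx _] := hopt; have [hnn hinf _ _] := hx.
  case/orP: (hab) => [hf|hi]; last by rewrite hinf // ltW.
  move: a b hab hf => [c0|[c0 i]] [c1|[c1 j]] //= hab /andP [/eqP hc /eqP hj].
  subst c1; have := part3 _ _ _ hopt _ _ hj; rewrite /u_ /v_ => <-.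
  case: c0 hab => hab.
    by rewrite ler_wpDl // hnn // /gh_arc /= hj !eqxx.
  by rewrite ler_wpDr // hnn // /gh_arc /= hj !eqxx.
- move=> l hl hlh x hopt hfrac.
  have [hx _] := hopt; have [hnn _ _ _] := hx.
  have h1 : (1 < n.+1)%N by lia.
  pose i0 : 'I_n.+1 := Ordinal (ltn0Sn n); pose j0 : 'I_n.+1 := Ordinal h1.
  have := part3 _ _ _ hopt i0 j0 erefl.
  have ga : gh_arc n.+1 (u_ i0) (u_ j0) by [].
  have gb : gh_arc n.+1 (v_ i0) (v_ j0) by [].
  have [k1 ->] := hfrac _ _ ga; have [k2 ->] := hfrac _ _ gb.
  rewrite -mulrDl -intrD; set k := (k1 + k2)%R => hk.
  have hl0 : l%:R != 0 :> R by rewrite pnatr_eq0 -lt0n.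
  have e : k%:~R = 2 / (n.+1)%:R * l%:R :> R by rewrite -hk divfK.
  have k0 : (0 < k)%R by rewrite -(ltr0z R) e mulr_gt0 // ltr0n.
  have k1' : (k < 1)%R.
    rewrite -(ltrz1 R) e mulrAC ltr_pdivrMr ?ltr0n // mul1r.
    by rewrite -natrM ltr_nat.
  lia.
Qed.
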